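(* Let $G_1$ be a $(q_1,q_2)$-semi-regular bipartite graph with bipartition $V_1,V_2$, $|V_1|=n_1\le n_2=|V_2|$, $\nu_1=n_1+n_2$, and let $G_2$ be a $(q_3,q_4)$-semi-regular bipartite graph with bipartition $V_3,V_4$, $|V_3|=n_3\le n_4=|V_4|$, $\nu_2=n_3+n_4$. Write $spec(G_1)=\{\pm\lambda_1,\dots,\pm\lambda_{k_1},0^{(\nu_1-2k_1)}\}$ and $spec(G_2)=\{\pm\mu_1,\dots,\pm\mu_{k_2},0^{(\nu_2-2k_2)}\}$ where $k_1,k_2$ are the numbers of positive eigenvalues, $\sqrt{q_1q_2}=\lambda_1\ge\dots\ge\lambda_{k_1}>0$, $\sqrt{q_3q_4}=\mu_1\ge\dots\ge\mu_{k_2}>0$. Then the number of spanning trees of $G=G_1\vee G_2$ is $$\tau(G)=(q_1+q_2+\nu_2)(q_3+q_4+\nu_1)(q_1+\nu_2)^{n_1-k_1}(q_2+\nu_2)^{n_2-k_1}(q_3+\nu_1)^{n_3-k_2}(q_4+\nu_1)^{n_4-k_2}\prod_{i=2}^{k_1}\big[(q_1+\nu_2)(q_2+\nu_2)-\lambda_i^2\big]\prod_{j=2}^{k_2}\big[(q_3+\nu_1)(q_4+\nu_1)-\mu_j^2\big].$$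
   Context: A bipartite graph with bipartition $(V_1,V_2)$ is $(q_1,q_2)$-semi-regular if every vertex of $V_1$ has degree $q_1$ and every vertex of $V_2$ has degree $q_2$ ($q_1,q_2\ge1$). The join $G_1\vee G_2$ has vertex set $V(G_1)\sqcup V(G_2)$ and edge set $E(G_1)\cup E(G_2)\cup\{uv:u\in V(G_1),v\in V(G_2)\}$. $spec$ denotes the multiset of adjacency eigenvalues (exponents in parentheses denote multiplicities); $\tau(G)$ is the number of spanning trees of $G$. *)

(* Defs.v *)
From HB Require Import structures.
From mathcomp Require Import all_boot all_order all_algebra.
Set Implicit Arguments. Unset Strict Implicit. Unset Printing Implicit Defensive.
Import Order.TTheory GRing.Theory Num.Theory.

Definition simple_graph (T : finType) (e : rel T) : Prop :=
  symmetric e /\ irreflexive e.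

Definition semi_regular_bip (T : finType) (e : rel T) (V1 V2 : {set T})
  (q1 q2 : nat) : Prop :=
  [/\ V1 :&: V2 = set0, V1 :|: V2 = setT,
      (forall x y, e x y -> (x \in V1) = (y \in V2)),
      (forall x, x \in V1 -> #|[set y | e x y]| = q1) &
      (forall x, x \in V2 -> #|[set y | e x y]| = q2)] /\
  (1 <= q1)%N /\ (1 <= q2)%N.

Definition join_rel (m p : nat) (e1 : rel 'I_m) (e2 : rel 'I_p) : rel 'I_(m + p) :=
  fun i j => match split i, split j with
             | inl a, inl b => e1 a b
             | inr a, inr b => e2 a b
             | _, _ => true
             end.

Definition adjmx (R : nzRingType) (m : nat) (e : rel 'I_m) : 'M[R]_m :=
  \matrix_(i, j) ((e i j)%:R)%R.

(* Acyclicity is expressed as: no edge of F lies on a cycle, i.e. the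
   endpoints of every edge f of F are disconnected in F \ {f}. *)
Definition frel (T : finType) (F : {set {set T}}) : rel T :=
  fun x y => (x != y) && ([set x; y] \in F).

Definition is_edge (T : finType) (e : rel T) (f : {set T}) : bool :=
  [exists x, exists y, e x y && (f == [set x; y])].

Definition spanning_tree (T : finType) (e : rel T) (F : {set {set T}}) : bool :=
  [&& [forall f in F, is_edge e f],
      [forall x, forall y, connect (frel F) x y] &
      [forall f in F, forall x, forall y,
         ((f == [set x; y]) && (x != y)) ==> ~~ connect (frel (F :\ f)) x y]].

Definition num_spanning_trees (T : finType) (e : rel T) : nat :=
  #|[set F : {set {set T}} | spanning_tree e F]|.

(* Main.v *)
Require Import Defs.
From HB Require Import structures.
From mathcomp Require Import all_boot all_order all_algebra fingroup perm.
From mathcomp Require Import zify ring lra.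
Require Import Defs.

Module PartA1.
Set Implicit Arguments. Unset Strict Implicit. Unset Printing Implicit Defensive.
Import Order.TTheory GRing.Theory Num.Theory.
Local Open Scope ring_scope.

Section DetExp.
Variable R : comNzRingType.

Lemma det_sum_rows n (J : finType) (S : 'I_n -> pred J) (g : 'I_n -> J -> 'I_n -> R) :
  \det (\matrix_(i, k) \sum_(j | S i j) g i j k) =
  \sum_(f in family S) \det (\matrix_(i, k) g i (f i) k).
Proof.
rewrite /determinant.
transitivity (\sum_(s : 'S_n) \sum_(f in family S) (-1) ^+ s * \prod_i g i (f i) (s i)).
  apply: eq_bigr => s _; rewrite -mulr_sumr; congr (_ * _).
  rewrite -(bigA_distr_big_dep S (fun i j => g i j (s i))); apply: eq_bigr => i _; by rewrite mxE.
rewrite exchange_big /=; apply: eq_bigr => f _; apply: eq_bigr => s _.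
by congr (_ * _); apply: eq_bigr => i _; rewrite mxE.
Qed.
End DetExp.

End PartA1.
Import PartA1.

Module PartA2.
Set Implicit Arguments. Unset Strict Implicit. Unset Printing Implicit Defensive.
Import Order.TTheory GRing.Theory Num.Theory.
Local Open Scope ring_scope.

Definition acyc (T : finType) (f : T -> T) :=
  [forall i, exists y, fconnect f i y && (f y == y)].

Section Iter.
Variables (T : finType) (f : T -> T).

Lemma fconnect_iterP x y : fconnect f x y -> exists n, y = iter n f x.
Proof. by move=> /iter_findex <-; eexists. Qed.

Lemma iter_period p c x : iter p f x = x -> iter (c * p) f x = x.
Proof.
move=> Hp; elim: c => [|c IH] //=; by rewrite mulSn iterD IH Hp.
Qed.

Lemma iter_comm n x : f (iter n f x) = iter n f (f x).
Proof. by rewrite -iterS iterSr. Qed.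

Definition perS := [pred y | fconnect f (f y) y && (f y != y)].

Lemma perS_f y : y \in perS -> f y \in perS.
Proof.
rewrite !inE => /andP[/fconnect_iterP[a Ha] Hy]; apply/andP; split.
  by rewrite {2}Ha iter_comm fconnect_iter.
apply: contra Hy => /eqP Hff; apply/eqP; by rewrite {2}Ha iter_fix.
Qed.

Lemma perS_inj y z : y \in perS -> z \in perS -> f y = f z -> y = z.
Proof.
rewrite !inE => /andP[/fconnect_iterP[a Ha] _] /andP[/fconnect_iterP[b Hb] _] Hyz.
set w := f y in Ha Hyz.
have Pa : iter a.+1 f w = w by rewrite iterS -Ha.
have Pb : iter b.+1 f w = w by rewrite iterS Hyz -Hb.
have -> : y = iter (b * a.+1 + a) f w by rewrite addnC iterD iter_period.
have -> : z = iter (a * b.+1 + b) f w by rewrite addnC iterD iter_period // Hyz.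
congr iter; lia.
Qed.

Lemma perS_surj k : k \in perS -> exists2 j, j \in perS & f j = k.
Proof.
rewrite !inE => /andP[/fconnect_iterP[a Ha] Hk].
case: a Ha => [|a] Ha; first by move: Hk; rewrite /= in Ha; rewrite -Ha eqxx.
exists (iter a f (f k)); last by rewrite -iterS -Ha.
rewrite inE; apply/andP; split.
  by rewrite -iterS -Ha -iterSr fconnect_iter.
rewrite -iterS -Ha; apply: contra Hk => /eqP Hk.
by rewrite {1}Hk -iterS -Ha.
Qed.

End Iter.

End PartA2.
Import PartA2.

Module PartA3.
Set Implicit Arguments. Unset Strict Implicit. Unset Printing Implicit Defensive.
Import Order.TTheory GRing.Theory Num.Theory.
Local Open Scope ring_scope.

Section DetP.
Variable R : fieldType.

Definition Pmx n (f : 'I_n -> 'I_n) : 'M[R]_n :=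
  \matrix_(i, k) ((i == k)%:R - ((f i != i) && (k == f i))%:R).

Lemma det_Pmx n (f : 'I_n -> 'I_n) : \det (Pmx f) = (acyc f)%:R.
Proof.
case: (boolP (acyc f)) => Hac.
  rewrite /determinant (bigD1 1%g) //= [X in _ + X = _]big1 ?addr0.
    rewrite odd_perm1 expr0 mul1r; apply: big1 => i _.
    rewrite mxE perm1 eqxx; case: (f i =P i) => [->|/eqP Hf]; first by rewrite eqxx /= subr0.
    by rewrite eq_sym (negbTE Hf) andbF subr0.
  move=> s Hs.
  case: (pickP (fun i => Pmx f i (s i) == 0)) => [i /eqP Hi|H].
    by rewrite (bigD1 i) //= Hi mul0r mulr0.
  exfalso.
  have key i : s i != i -> s i = f i.
    move=> Hsi; move: (H i); rewrite mxE [i == s i]eq_sym (negbTE Hsi) sub0r oppr_eq0.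
    by case: (f i != i); case: (s i =P f i) => //= _; rewrite eqxx.
  have [i0 Hi0] : exists i0, s i0 != i0.
    apply/existsP; apply: contraR Hs => /existsPn Hx; apply/eqP/permP => i.
    by rewrite perm1; move: (Hx i); rewrite negbK => /eqP.
  have Hm m : s (iter m f i0) != iter m f i0.
    elim: m => [|m IH] //; rewrite iterS -(key _ IH).
    apply/negP => /eqP Hss; move: IH; rewrite -{2}(perm_inj Hss) eqxx //.
  move/forallP: Hac => /(_ i0) /existsP[y /andP[/iter_findex Hy /eqP Hfy]].
  move: (Hm (findex f i0 y)); rewrite Hy.
  move=> Hsy; have Hk := key _ Hsy; by move: Hsy; rewrite Hk Hfy eqxx.
apply/eqP; apply/det0P.
move/forallPn: Hac => [i0 /existsPn Hi0].
have Hnf y : fconnect f i0 y -> f y != y.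
  by move=> Hy; move: (Hi0 y); rewrite Hy.
have [y0 Hy0] : exists y0, y0 \in perS f.
  move: (looping_order f i0); rewrite /looping => /trajectP[m Hm Heq].
  exists (iter m f i0); rewrite inE; apply/andP; split; last exact/Hnf/fconnect_iter.
  have E : fingraph.order f i0 = ((fingraph.order f i0 - m.+1) + m.+1)%N by rewrite subnK.
  by move: Heq; rewrite E iterD iterS => Hq; rewrite -{2}Hq; apply: fconnect_iter.
exists (\row_j ((j \in perS f)%:R)).
  apply/negP => /eqP /matrixP /(_ 0 y0); rewrite !mxE Hy0 => /eqP; by rewrite oner_eq0.
apply/matrixP => z k; rewrite !mxE.
under eq_bigr => j _ do rewrite !mxE mulr_natl mulrnBl.
rewrite sumrB.
have Hsum1 : \sum_j ((j == k)%:R *+ (j \in perS f)) = (k \in perS f)%:R :> R.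
  rewrite (bigD1 k) //= eqxx big1 ?addr0; first by case: (k \in perS f).
  by move=> j /negbTE ->; rewrite mul0rn.
have Hsum2 : \sum_j ((f j != j) && (k == f j))%:R *+ (j \in perS f) = (k \in perS f)%:R :> R.
  case: (boolP (k \in perS f)) => Hk.
    have [j0 Hj0 Hfj0] := perS_surj Hk.
    rewrite (bigD1 j0) //= Hj0 Hfj0 eqxx andbT big1 ?addr0.
      by move: Hj0; rewrite inE Hfj0 => /andP[_ ->].
    move=> j Hj; case: (boolP (j \in perS f)) => Hjp; last by rewrite mulr0n.
    case: (boolP (k == f j)) => [/eqP Hkj|]; last by rewrite andbF.
    by move: Hj; rewrite (perS_inj Hjp Hj0) ?eqxx // Hfj0.
  rewrite big1 // => j _; case: (boolP (j \in perS f)) => Hjp; last by rewrite mulr0n.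
  case: (boolP (k == f j)) => [/eqP Hkj|]; last by rewrite andbF.
  by move: Hk; rewrite Hkj perS_f.
by rewrite Hsum1 Hsum2 subrr.
Qed.
End DetP.

End PartA3.
Import PartA3.

Module PartB.
Set Implicit Arguments. Unset Strict Implicit. Unset Printing Implicit Defensive.

Lemma set2_eq (T : finType) (x y a b : T) :
  [set x; y] = [set a; b] -> (x = a /\ y = b) \/ (x = b /\ y = a).
Proof.
move=> E.
have xa : x \in [set a; b] by rewrite -E set21.
have yb : y \in [set a; b] by rewrite -E set22.
have ax : a \in [set x; y] by rewrite E set21.
have bx : b \in [set x; y] by rewrite E set22.
move/set2P: xa => [] Ex; move/set2P: yb => [] Ey; subst; auto.
  by move/set2P: bx => [] Eb; subst; auto.
by move/set2P: ax => [] Ea; subst; auto.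
Qed.

Lemma frel_sym (T : finType) (F : {set {set T}}) : symmetric (frel F).
Proof. by move=> x y; rewrite /frel eq_sym setUC. Qed.

Section Trees.
Variables (T : finType) (e : rel T).
Hypothesis esy : symmetric e.
Hypothesis eirr : irreflexive e.
Variable r : T.

Definition rooted (f : {ffun T -> T}) :=
  (f r == r) && [forall i, (i != r) ==> e i (f i)].

Definition treeF (f : {ffun T -> T}) : {set {set T}} :=
  [set [set i; f i] | i in [set~ r]].

Section Rooted.
Variable f : {ffun T -> T}.
Hypothesis Hf : rooted f.
Hypothesis Ha : acyc f.

Lemma rooted_r : f r = r.
Proof. by case/andP: Hf => /eqP. Qed.

Lemma rooted_e i : i != r -> e i (f i).
Proof. by case/andP: Hf => _ /forallP /(_ i) /implyP. Qed.

Lemma rooted_neq i : i != r -> f i != i.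
Proof. move=> /rooted_e; apply: contraTneq => ->; by rewrite eirr. Qed.

Lemma reach x : exists n, iter n f x = r.
Proof.
move/forallP: Ha => /(_ x) /existsP[y /andP[Hc /eqP Hy]].
have Hyr : y = r.
  apply/eqP; apply: contraT => /rooted_neq; by rewrite Hy eqxx.
by exists (findex f x y); rewrite iter_findex // -Hyr.
Qed.

Lemma periodic_r p x : iter p.+1 f x = x -> x = r.
Proof.
move=> Hp; have [n Hn] := reach x.
have E : (n * p.+1 = (n * p.+1 - n) + n)%N by rewrite subnK // leq_pmulr.
by rewrite -(iter_period n Hp) E iterD Hn iter_fix // rooted_r.
Qed.

Lemma treeF_conn x y : connect (frel (treeF f)) x y.
Proof.
have H n z : connect (frel (treeF f)) z (iter n f z).
  elim: n z => [|n IH] z; first exact: connect0.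
  rewrite iterSr; case: (eqVneq z r) => [->|Hz].
    by rewrite rooted_r; apply: IH.
  apply: connect_trans (IH _); apply: connect1.
  rewrite /frel eq_sym rooted_neq //=.
  by apply/imsetP; exists z; rewrite ?in_setC1.
have [n Hn] := reach x; have [m Hm] := reach y.
apply: connect_trans (H n x) _; rewrite Hn -Hm.
by rewrite (sym_connect_sym (@frel_sym _ _)) H.
Qed.

Lemma treeF_spanning : spanning_tree e (treeF f).
Proof.
apply/and3P; split.
- apply/forallP => s; apply/implyP => /imsetP[i Hi ->].
  apply/existsP; exists i; apply/existsP; exists (f i).
  by rewrite rooted_e ?eqxx // -in_setC1.
- by apply/forallP => x; apply/forallP => y; apply: treeF_conn.
apply/forallP => s; apply/implyP => Hs; apply/forallP => x; apply/forallP => y.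
apply/implyP => /andP[/eqP Hsxy Hxy].
move: (Hs) => /imsetP[i Hi Hsi]; rewrite in_setC1 in Hi.
set G := frel (treeF f :\ s).
have Gsym : connect_sym G by apply: sym_connect_sym; apply: frel_sym.
suff Hif : ~~ connect G i (f i).
  rewrite Hsxy in Hsi; case: (set2_eq Hsi) => [[-> ->]|[-> ->]] //.
  by rewrite Gsym.
have Hcl : closed G [pred z | fconnect f z i].
  move=> u v /andP[Huv]; rewrite in_setD1 => /andP[Hns /imsetP[j Hj Hj']].
  have Hji : j != i by apply: contraNneq Hns => Ej; rewrite Hj' Ej -Hsi.
  have key : fconnect f j i = fconnect f (f j) i.
    apply/idP/idP => H.
      case/fconnect_iterP: H => n Hn; case: n Hn => [|n] Hn.
        by rewrite Hn eqxx in Hji.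
      by rewrite Hn iterSr fconnect_iter.
    exact: connect_trans (fconnect1 _ _) H.
  by case: (set2_eq Hj') => [[-> ->]|[-> ->]] //=.
apply/negP => /(closed_connect Hcl); rewrite !inE connect0 => /esym.
case/fconnect_iterP => n Hn.
have : i = r by apply: (@periodic_r n); rewrite iterSr -Hn.
by move/eqP; rewrite (negbTE Hi).
Qed.

End Rooted.

Lemma treeF_inj f g : rooted f -> acyc f -> rooted g -> acyc g ->
  treeF f = treeF g -> f = g.
Proof.
move=> Hf Haf Hg Hag E; apply/ffunP => i.
case: (eqVneq i r) => [->|Hi]; first by rewrite !rooted_r.
apply/eqP; apply: contraT => Hfg.
have H m : (iter m g i != r) && (f (iter m g i) != g (iter m g i)).
  elim: m => [|m IH]; first by rewrite Hi Hfg.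
  case/andP: IH; set x := iter m g i => Hx Hfx.
  have : [set x; g x] \in treeF f by rewrite E; apply/imsetP; exists x; rewrite ?in_setC1.
  case/imsetP => j Hj /set2_eq [[Ej Egj]|[Ej Egj]].
    by move: Hfx; rewrite Egj Ej eqxx.
  rewrite iterS -/x Egj -in_setC1 Hj /=.
  apply/negP => /eqP Hgg.
  have Hx2 : iter 2 g x = x by rewrite /= Egj -Hgg; apply/esym.

  by move: Hx; rewrite (periodic_r Hg Hag Hx2) eqxx.
have [n Hn] := reach Hg Hag i.
by move: (H n); rewrite Hn eqxx.
Qed.

Section Surj.
Variable F : {set {set T}}.
Hypothesis HF : spanning_tree e F.

Definition Pd x n := [exists p : n.-tuple T, path (frel F) x p && (last x p == r)].

Lemma Pd_ex x : exists n, Pd x n.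
Proof.
case/and3P: HF => _ /forallP /(_ x) /forallP /(_ r) /connectP[p Hp Hl] _.
exists (size p); apply/existsP; exists (in_tuple p); by rewrite Hp -Hl eqxx.
Qed.

Definition dist x := ex_minn (Pd_ex x).

Lemma dist_step x : x != r -> exists y, frel F x y && (dist y < dist x)%N.
Proof.
move=> Hx; rewrite /dist; case: ex_minnP => n /existsP[p /andP[Hp Hl]] Hmin.
case: n p Hp Hl Hmin => [|n] p Hp Hl Hmin.
  by move: Hl; rewrite tuple0 /= (negbTE Hx).
rewrite (tuple_eta p) /= in Hp Hl.
case/andP: Hp => H1 H2; exists (thead p); rewrite H1 /=.
case: ex_minnP => m _ Hm; apply: leq_ltn_trans (Hm n _) _ => //.
by apply/existsP; exists (behead_tuple p); rewrite H2.
Qed.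

Definition fF : {ffun T -> T} :=
  [ffun x => if x == r then r else odflt r [pick y | frel F x y && (dist y < dist x)%N]].

Lemma fF_prop x : x != r -> frel F x (fF x) && (dist (fF x) < dist x)%N.
Proof.
move=> Hx; rewrite ffunE (negbTE Hx).
case: pickP => [y Hy|H] //=.
by have [y Hy] := dist_step Hx; move: (H y); rewrite Hy.
Qed.

Lemma F_edge x y : frel F x y -> e x y.
Proof.
case/andP=> _ Hs; case/and3P: HF => /forallP /(_ [set x; y]) /implyP /(_ Hs).
case/existsP=> a /existsP[b /andP[Hab /eqP E]] _ _.
by case: (set2_eq E) => [[-> ->]|[-> ->]] //; rewrite esy.
Qed.

Lemma fF_rooted : rooted fF.
Proof.
apply/andP; split; first by rewrite ffunE eqxx.
apply/forallP => x; apply/implyP => Hx.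
by case/andP: (fF_prop Hx) => /F_edge.
Qed.

Lemma fF_acyc : acyc fF.
Proof.
have H n x : (dist x < n)%N -> fconnect fF x r.
  elim: n x => [|n IH] x //; case: (eqVneq x r) => [->|Hx] Hd; first exact: connect0.
  case/andP: (fF_prop Hx) => _ Hlt.
  apply: connect_trans (fconnect1 _ _) (IH _ _).
  exact: leq_trans Hlt Hd.
apply/forallP => x; apply/existsP; exists r.
by rewrite ffunE !eqxx andbT; apply: (H (dist x).+1).
Qed.

Lemma fF_tree : treeF fF = F.
Proof.
have sub : treeF fF \subset F.
  apply/subsetP => s /imsetP[i Hi ->]; rewrite in_setC1 in Hi.
  by case/andP: (fF_prop Hi) => /andP[].
apply/eqP; rewrite eqEsubset sub /=; apply/subsetP => s Hs.
apply: contraT => Hns.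
case/and3P: HF => /forallP /(_ s) /implyP /(_ Hs) /existsP[a /existsP[b /andP[Hab /eqP Es]]] _.
move/forallP => /(_ s) /implyP /(_ Hs) /forallP /(_ a) /forallP /(_ b) /implyP.
rewrite Es eqxx /=; have -> : a != b by apply: contraTneq Hab => ->; rewrite eirr.
move=> /(_ isT) /negP H; exfalso; apply: H.
apply: connect_sub (treeF_conn fF_rooted fF_acyc a b) => u v /andP[Huv Hin].
apply: connect1; rewrite /frel Huv in_setD1 -Es (subsetP sub _ Hin) andbT.
by apply: contraNneq Hns => <-.
Qed.
End Surj.

Lemma card_rooted :
  #|[set f : {ffun T -> T} | rooted f && acyc f]| = num_spanning_trees e.
Proof.
rewrite /num_spanning_trees.
have -> : [set F : {set {set T}} | spanning_tree e F] =
          treeF @: [set f : {ffun T -> T} | rooted f && acyc f].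
  apply/setP => F; rewrite inE; apply/idP/imsetP.
    move=> HF; exists (fF HF); last by rewrite fF_tree.
    by rewrite inE fF_rooted fF_acyc.
  by case=> f; rewrite inE => /andP[Hf Ha] ->; apply: treeF_spanning.
rewrite card_in_imset // => f g; rewrite !inE => /andP[Hf Haf] /andP[Hg Hag].
exact: treeF_inj.
Qed.
End Trees.

End PartB.
Import PartB.

Module PartC.
Set Implicit Arguments. Unset Strict Implicit. Unset Printing Implicit Defensive.
Import Order.TTheory GRing.Theory Num.Theory.
Local Open Scope ring_scope.

Section MT.
Variable R : fieldType.
Variable N : nat.
Variable e : rel 'I_N.
Hypothesis esy : symmetric e.
Hypothesis eirr : irreflexive e.

Definition lap : 'M[R]_N :=
  \matrix_(i, j) ((#|[set y | e i y]|)%:R *+ (i == j)%N - (e i j)%:R).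

Definition gJ (i j k : 'I_N) : R := if j == i then 1 else (i == k)%:R - (j == k)%:R.

Definition SJ (i : 'I_N) : pred 'I_N := fun j => e i j || (j == i).

Lemma lapJ_sum : lap + const_mx 1 = \matrix_(i, k) \sum_(j | SJ i j) gJ i j k.
Proof.
apply/matrixP => i k; rewrite !mxE (bigD1 i) /=; last by rewrite /SJ eqxx orbT.
rewrite /gJ eqxx addrC; congr (_ + _).
rewrite (eq_bigl (fun j => e i j)); last first.
  move=> j; rewrite /SJ; case: (eqVneq j i) => [->|Hj]; first by rewrite eirr.
  by rewrite orbF andbT.
rewrite (eq_bigr (fun j => (i == k)%:R - (j == k)%:R)); last first.
  by move=> j Hj; case: (eqVneq j i) Hj => [->|] //; rewrite eirr.
rewrite sumrB sumr_const; congr (_ - _).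
  have -> : #|[set y | e i y]| = #|[pred j | e i j]| by apply: eq_card => y; rewrite inE.
  by case: (i == k); rewrite ?mulr0n ?mul0rn ?mulr1n.
case: (boolP (e i k)) => Hik.
  rewrite (bigD1 k) //= eqxx big1 ?addr0 // => j /andP[_ /negbTE ->] //.
by rewrite big1 // => j Hj; case: (eqVneq j k) Hj => [->|] //; rewrite (negbTE Hik).
Qed.

Definition Xf (f : 'I_N -> 'I_N) : 'M[R]_N := \matrix_(i, k) gJ i (f i) k.

Lemma signr_rr (r : 'I_N) : (-1) ^+ (r + r)%N = 1 :> R.
Proof. by rewrite -signr_odd addnn odd_double expr0. Qed.

Lemma detX_rooted (f : 'I_N -> 'I_N) (r : 'I_N) :
  f r = r -> (forall i, i != r -> f i != i) ->
  \det (Xf f) = N%:R * \det (Pmx R f).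
Proof.
move=> Hr Hn.
pose Q : 'M[R]_N := \matrix_(i, j) ((i == j) || ((j == r) && (i != r)))%:R.
have detQ : \det Q = 1.
  rewrite (expand_det_row _ r) (bigD1 r) //= big1 ?addr0; last first.
    by move=> j Hj; rewrite mxE eq_sym (negbTE Hj) /= mul0r.
  rewrite mxE eqxx /= mul1r /cofactor signr_rr mul1r.
  have -> : row' r (col' r Q) = 1%:M.
    apply/matrixP => i j; rewrite !mxE (inj_eq (@lift_inj _ r)).
    by rewrite [lift r j == r]eq_sym (negbTE (neq_lift r j)) /= orbF; case: (i == j).
  exact: det1.
have -> : \det (Xf f) = \det (Xf f *m Q) by rewrite det_mulmx detQ mulr1.
rewrite (expand_det_col _ r) (bigD1 r) //= big1 ?addr0; last first.
  move=> i Hi; rewrite mxE.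
  rewrite (eq_bigr (fun k => Xf f i k)); last first.
    by move=> k _; rewrite !mxE eqxx; case: (eqVneq k r) => _ /=; rewrite mulr1.
  rewrite (eq_bigr (fun k => (i == k)%:R - (f i == k)%:R)); last first.
    by move=> k _; rewrite mxE /gJ (negbTE (Hn _ Hi)).
  rewrite sumrB (bigD1 i) //= eqxx big1 ?addr0; last by move=> k /negbTE; rewrite eq_sym => ->.
  rewrite (bigD1 (f i)) //= eqxx big1 ?addr0 ?subrr ?mul0r //.
  by move=> k /negbTE; rewrite eq_sym => ->.
rewrite mxE (eq_bigr (fun k => 1)); last first.
  move=> k _; rewrite !mxE eqxx Hr /gJ eqxx; case: (eqVneq k r) => _ /=; by rewrite mulr1.
rewrite sumr_const card_ord /cofactor signr_rr mul1r.
rewrite (expand_det_row (Pmx R f) r) (bigD1 r) //= big1 ?addr0; last first.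
  by move=> j Hj; rewrite mxE Hr eqxx /= eq_sym (negbTE Hj) subr0 mul0r.
rewrite mxE Hr !eqxx /= subr0 mul1r /cofactor signr_rr mul1r.
have Hl a : lift r a != r by rewrite eq_sym neq_lift.
congr (_ * \det _); apply/matrixP => i j; rewrite !mxE.
rewrite (bigD1 (lift r j)) //= big1 ?addr0; last first.
  move=> k Hk; rewrite [Q _ _]mxE (negbTE Hk) [lift r j == r]eq_sym (negbTE (neq_lift r j)) andFb orbF mulr0 //.
rewrite [Q _ _]mxE eqxx /= mulr1 /Xf mxE /gJ (negbTE (Hn _ (Hl i))).
by rewrite /= [lift r j == _]eq_sym.
Qed.

Lemma detX_term (f : {ffun 'I_N -> 'I_N}) : (0 < N)%N -> f \in family SJ ->
  \det (Xf f) = N%:R * \sum_r ((rooted e r f && acyc f))%:R.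
Proof.
move=> N0 /familyP Hfam.
case: (pickP (fun r => rooted e r f)) => [r Hr|Hnr].
  have Hr' := Hr; case/andP: Hr' => /eqP Hfr /forallP Hall.
  rewrite (bigD1 r) //= Hr big1 ?addr0; last first.
    move=> r' Hr'; case/andP: (Hr) => _ /forallP /(_ r') /implyP /(_ Hr').
    by case: (boolP (rooted e r' f)) => //= /andP[/eqP -> _]; rewrite eirr.
  rewrite (@detX_rooted f r) ?det_Pmx //.
  move=> i Hi; move/implyP: (Hall i) => /(_ Hi).
  by apply: contraTneq => ->; rewrite eirr.
rewrite big1 ?mulr0; last by move=> r _; rewrite Hnr.
case: (pickP (fun i => f i == i)) => [i1 Hi1|Hnf]; last first.
  have -> : Xf f = Pmx R f.
    apply/matrixP => i k; rewrite !mxE /gJ Hnf /=.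
    by rewrite [k == _]eq_sym.
  rewrite det_Pmx; case: (boolP (acyc f)) => // /forallP /(_ (Ordinal N0)).
  by case/existsP => y /andP[_]; rewrite Hnf.
case: (pickP (fun i => (f i == i) && (i != i1))) => [i2 /andP[Hi2 H21]|Hno].
  apply: (@determinant_alternate _ _ _ i2 i1) => // k.
  by rewrite !mxE /gJ Hi1 Hi2.
exfalso; move: (Hnr i1); rewrite /rooted Hi1 /=; move/negP; apply.
apply/forallP => i; apply/implyP => Hi; move: (Hfam i) (Hno i).
by rewrite /SJ /= Hi andbT => H Hfi; move: H; rewrite unfold_in /= Hfi orbF.
Qed.

Lemma sum_bool (T : finType) (P : pred T) : \sum_(x : T) (P x)%:R = #|[set x | P x]|%:R :> R.
Proof.
rewrite (eq_bigr (fun x => if P x then 1 else 0)); last by move=> x _; case: (P x).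
rewrite -big_mkcond sumr_const; congr (_ *+ _).
by apply: eq_card => x; rewrite inE.
Qed.

Theorem matrix_tree : (0 < N)%N ->
  \det (lap + const_mx 1) = (N * N * num_spanning_trees e)%:R.
Proof.
move=> N0; rewrite lapJ_sum det_sum_rows.
rewrite (eq_bigr (fun f => N%:R * \sum_r ((rooted e r f && acyc f))%:R)); last first.
  by move=> f Hf; apply: detX_term.
rewrite -mulr_sumr exchange_big /=.
rewrite (eq_bigr (fun r => (num_spanning_trees e)%:R)); last first.
  move=> r _; rewrite -(card_rooted esy eirr r) -sum_bool.
  rewrite big_mkcond /=; apply: eq_bigr => f _.
  case: (boolP (f \in family SJ)) => // /familyP Hfam.
  case: (boolP (rooted e r f)) => //= /andP[/eqP Hfr /forallP Hall].
  exfalso; apply: Hfam => i; rewrite unfold_in /SJ /=; case: (eqVneq i r) => [->|Hi].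
    by rewrite Hfr eqxx orbT.
  by move/implyP: (Hall i) => /(_ Hi) ->.
rewrite sumr_const card_ord !natrM -mulr_natr. ring.
Qed.
End MT.

End PartC.
Import PartC.

Module PartD.
Set Implicit Arguments. Unset Strict Implicit. Unset Printing Implicit Defensive.
Import Order.TTheory GRing.Theory Num.Theory.
Local Open Scope ring_scope.

Lemma det_rank1 (R : comNzRingType) n (u : 'cV[R]_n) (v : 'rV[R]_n) :
  \det (1%:M + u *m v) = 1 + (v *m u) 0 0.
Proof.
have E1 : block_mx 1%:M (- u) v 1%:M =
          block_mx 1%:M 0 v 1%:M *m block_mx 1%:M (-u) 0 (1%:M + v *m u).
  rewrite mulmx_block ?mul1mx ?mul0mx ?mulmx1 ?mulmx0 ?addr0 ?add0r ?mulmxN ?mulNmx.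
  by rewrite [- _ + _]addrC addrK.
have E2 : block_mx 1%:M (- u) v 1%:M =
          block_mx (1%:M + u *m v) (-u) 0 1%:M *m block_mx 1%:M 0 v 1%:M.
  rewrite mulmx_block ?mul1mx ?mul0mx ?mulmx1 ?mulmx0 ?addr0 ?add0r ?mulmxN ?mulNmx.
  by rewrite addrK.
have H1 : \det (block_mx 1%:M (-u) v 1%:M) = 1 + (v *m u) 0 0.
  by rewrite E1 det_mulmx det_lblock det_ublock !det1 !mul1r det_mx11 !mxE.
have H2 : \det (block_mx 1%:M (-u) v 1%:M) = \det (1%:M + u *m v).
  by rewrite E2 det_mulmx det_ublock det_lblock !det1 !mulr1.
by rewrite -H2 H1.
Qed.

Lemma det_addJ (R : fieldType) n (M : 'M[R]_n) (t : R) :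
  (forall i, \sum_k M i k = t) -> t != 0 -> t + n%:R != 0 ->
  \det (M + const_mx 1) = \det M * (t + n%:R) / t.
Proof.
move=> Hrow Ht Htn.
set J : 'M[R]_n := const_mx 1.
set c := (t + n%:R)^-1.
have MJ : M *m J = t *: J.
  apply/matrixP => i j; rewrite !mxE -(Hrow i) mulr1.
  by apply: eq_bigr => k _; rewrite mxE mulr1.
have JJ : J *m J = n%:R *: J.
  apply/matrixP => i j; rewrite !mxE mulr1.
  under eq_bigr do rewrite !mxE mulr1.
  by rewrite sumr_const card_ord.
have E : (M + J) *m (1%:M - c *: J) = M.
  rewrite mulmxDl !mulmxBr !mulmx1 -!scalemxAr MJ JJ !scalerA.
  have -> : J - (c * n%:R) *: J = (1 - c * n%:R) *: J by rewrite scalerBl scale1r.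
  rewrite -addrA -scaleNr -scalerDl.
  have -> : - (c * t) + (1 - c * n%:R) = 0 by rewrite /c; field.
  by rewrite scale0r addr0.
have D : \det (1%:M - c *: J) = 1 - c * n%:R.
  have -> : 1%:M - c *: J = 1%:M + (- c *: (const_mx 1 : 'cV[R]_n)) *m (const_mx 1 : 'rV[R]_n).
    congr (_ + _); rewrite scaleNr mulNmx -scalemxAl; congr (- (_ *: _)).
    apply/matrixP => i j; rewrite !mxE big_ord1 !mxE mulr1 //.
  rewrite det_rank1 !mxE.
  under eq_bigr do rewrite !mxE mulr1 mul1r.
  by rewrite sumr_const card_ord mulNrn mulr_natr.
have := congr1 determinant E; rewrite det_mulmx D => HE.
have H1 : 1 - c * n%:R = t / (t + n%:R).
  by rewrite /c; field.
rewrite -HE H1; field; by apply/andP.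
Qed.

End PartD.
Import PartD.

Module PartE.
Set Implicit Arguments. Unset Strict Implicit. Unset Printing Implicit Defensive.
Import Order.TTheory GRing.Theory Num.Theory.
Local Open Scope ring_scope.

Lemma poly_pos0 (R : realFieldType) (q : {poly R}) :
  (forall x, 0 < x -> q.[x] = 0) -> q = 0.
Proof.
move=> Hq; apply/eqP; apply: contraT => Hq0.
have := max_poly_roots Hq0 (rs := [seq (i.+1)%:R | i <- iota 0 (size q)]).
rewrite size_map size_iota ltnn; apply.
  by apply/allP => x /mapP[i _ ->]; apply/eqP/Hq; rewrite ltr0Sn.
by rewrite map_inj_uniq ?iota_uniq // => i j /eqP; rewrite eqr_nat => /eqP [] ->.
Qed.

Lemma char_poly_horner (R : comNzRingType) n (A : 'M[R]_n) (s : R) :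
  (char_poly A).[s] = \det (s%:M - A).
Proof.
rewrite /char_poly -horner_evalE -det_map_mx; congr (\det _).
apply/matrixP => i j; rewrite /char_poly_mx !mxE /= horner_evalE hornerD hornerN hornerC.
by rewrite hornerMn hornerX.
Qed.

Section Bip.
Variable R : rcfType.
Variables (n : nat) (e : rel 'I_n) (V1 V2 : {set 'I_n}) (lam : seq R).
Hypothesis Hdisj : V1 :&: V2 = set0.
Hypothesis Hcov : V1 :|: V2 = setT.
Hypothesis Hbip : forall x y, e x y -> (x \in V1) = (y \in V2).
Hypothesis Hirr : irreflexive e.
Hypothesis Hchar : char_poly (adjmx R e) =
    \prod_(x <- lam ++ map -%R lam ++ nseq (n - 2 * size lam) 0) ('X - x%:P).

Lemma inV2 x : (x \in V2) = (x \notin V1).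
Proof.
case: (boolP (x \in V1)) => H1 /=.
  apply/negP => H2; have : x \in V1 :&: V2 by rewrite inE H1 H2.
  by rewrite Hdisj inE.
have : x \in V1 :|: V2 by rewrite Hcov inE.
by rewrite inE (negbTE H1).
Qed.

Definition Mab (a b : R) : 'M[R]_n :=
  \matrix_(i, j) ((if i \in V1 then a else b) *+ (i == j) - (e i j)%:R).

Lemma size_lam2 : (2 * size lam <= n)%N.
Proof.
have := size_char_poly (adjmx R e); rewrite Hchar size_prod_XsubC.
rewrite !size_cat size_map size_nseq => [[]]; lia.
Qed.

Lemma prod_if (a b : R) : \prod_(i < n) (if i \in V1 then a else b) = a ^+ #|V1| * b ^+ #|V2|.
Proof.
rewrite (bigID (fun i => i \in V1)) /=.
rewrite (eq_bigr (fun _ => a)); last by move=> i ->.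
rewrite [X in _ * X](eq_bigr (fun _ => b)); last by move=> i /negbTE ->.
rewrite !prodr_const; congr (_ ^+ _ * _ ^+ _).
by apply: eq_card => x; rewrite [in RHS]inV2 unfold_in.
Qed.

Lemma det_Mab (a b : R) : 0 < a -> 0 < b ->
  \det (Mab a b) * (a * b) ^+ size lam =
  a ^+ #|V1| * b ^+ #|V2| * \prod_(l <- lam) (a * b - l ^+ 2).
Proof.
move=> a0 b0.
set s1 := Num.sqrt a; set s2 := Num.sqrt b; set s := s1 * s2.
have s10 : 0 < s1 by rewrite sqrtr_gt0.
have s20 : 0 < s2 by rewrite sqrtr_gt0.
have s0 : 0 < s by rewrite mulr_gt0.
have s1a : s1 ^+ 2 = a by rewrite sqr_sqrtr // ltW.
have s2b : s2 ^+ 2 = b by rewrite sqr_sqrtr // ltW.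
have sab : s ^+ 2 = a * b by rewrite exprMn s1a s2b.
set sg := \row_(i < n) (if i \in V1 then s1 else s2).
set A := adjmx R e.
have EM : Mab a b = diag_mx sg *m (1%:M - s^-1 *: A) *m diag_mx sg.
  apply/matrixP => i j; rewrite mul_mx_diag mul_diag_mx !mxE.
  case: (eqVneq i j) => [->|Hij].
    rewrite Hirr /= ?mulr1n ?mulr0n ?mulr0 subr0 ?mulr1.
    by rewrite subr0 mulr1; case: (j \in V1); rewrite -expr2 ?s1a ?s2b.
  rewrite /= ?mulr0n sub0r.
  case: (boolP (e i j)) => Hij' /=; last by rewrite ?mulr0n mulr0 subr0 mulr0 mul0r oppr0.
  rewrite ?mulr1n mulr1 sub0r mulrN mulNr; congr (- _).
  rewrite mulrAC; have -> : (if i \in V1 then s1 else s2) * (if j \in V1 then s1 else s2) = s.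
    move: (Hbip Hij'); rewrite inV2.
    by case: (i \in V1); case: (j \in V1) => //= _; rewrite /s mulrC.
  by rewrite divff // gt_eqF.
have Esc : s%:M - A = s *: (1%:M - s^-1 *: A).
  by rewrite scalerBr scalemx1 scalerA mulfV ?scale1r // gt_eqF.
have Hchi : \det (s%:M - A) = s ^+ (n - 2 * size lam) * \prod_(l <- lam) (s ^+ 2 - l ^+ 2).
  rewrite -char_poly_horner Hchar horner_prod !big_cat /= big_map big_nseq.
  rewrite mulrA mulrC -big_split /=; congr (_ * _).
    rewrite /= hornerXsubC subr0; elim: (n - 2 * size lam)%N => //= m ->.
    by rewrite exprS.
  by apply: eq_bigr => l _; rewrite !hornerXsubC opprK -subr_sqr.
have HD : \det (Mab a b) = a ^+ #|V1| * b ^+ #|V2| * \det (1%:M - s^-1 *: A).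
  rewrite EM !det_mulmx det_diag mulrAC -big_split /=; congr (_ * _).
  rewrite -prod_if; apply: eq_bigr => i _; rewrite mxE.
  by case: (i \in V1); rewrite -expr2 ?s1a ?s2b.
have HS : \det (s%:M - A) = s ^+ n * \det (1%:M - s^-1 *: A) by rewrite Esc detZ.
rewrite HD -!mulrA; congr (_ * (_ * _)).
have Hk := size_lam2.
apply: (@mulfI _ (s ^+ (n - 2 * size lam))); first by rewrite expf_neq0 // gt_eqF.
by rewrite -sab -Hchi HS mulrCA -exprM -exprD subnK // mulrC.
Qed.

Lemma size_lam_le : all (fun x => 0 < x) lam -> (size lam <= #|V1|)%N.
Proof.
move=> Hpos.
set p : {poly R} := \det (\matrix_(i, j) ((if i \in V1 then 'X else 1) *+ (i == j) - (e i j)%:R)).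
have Hp a : p.[a] = \det (Mab a 1).
  rewrite -horner_evalE -det_map_mx; congr (\det _); apply/matrixP => i j.
  rewrite !mxE /= horner_evalE hornerD hornerN hornerMn.
  rewrite hornerMn -!polyC1 hornerC; by case: (i \in V1); rewrite ?hornerX ?hornerC.
set Pi := \prod_(l <- lam) ('X - (l ^+ 2)%:P).
have Hq : p * 'X^(size lam) - 'X^#|V1| * Pi = 0.
  apply: poly_pos0 => a a0.
  rewrite hornerD hornerN !hornerM Hp !hornerXn horner_prod.
  have := det_Mab a0 ltr01; rewrite !mulr1 expr1n mulr1 => ->.
  by apply/eqP; rewrite subr_eq0; apply/eqP; congr (_ * _); apply: eq_bigr => l _; rewrite hornerXsubC.
rewrite leqNgt; apply/negP => Hlt.
move: (congr1 (fun q : {poly R} => q`_#|V1|) Hq) => /=.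
rewrite coefB coefMXn coefXnM Hlt ltnn subnn coef0 sub0r => /eqP; rewrite oppr_eq0.
rewrite -horner_coef0 horner_prod; apply/negP; rewrite prodf_seq_neq0.
apply/allP => l Hl /=; rewrite hornerXsubC sub0r oppr_eq0 expf_neq0 //.
by move/allP: Hpos => /(_ l Hl) /gt_eqF ->.
Qed.
End Bip.

End PartE.
Import PartE.

Module PartF.
Set Implicit Arguments. Unset Strict Implicit. Unset Printing Implicit Defensive.
Import Order.TTheory GRing.Theory Num.Theory.
Local Open Scope ring_scope.

Section Join.
Variables (m p : nat) (e1 : rel 'I_m) (e2 : rel 'I_p).
Local Notation ej := (join_rel e1 e2).

Lemma split_l (i : 'I_m) : split (lshift p i) = inl i.
Proof. exact: (unsplitK (inl i)). Qed.
Lemma split_r (i : 'I_p) : split (rshift m i) = inr i.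
Proof. exact: (unsplitK (inr i)). Qed.

Lemma join_ll i j : ej (lshift p i) (lshift p j) = e1 i j.
Proof. by rewrite /join_rel !split_l. Qed.
Lemma join_rr i j : ej (rshift m i) (rshift m j) = e2 i j.
Proof. by rewrite /join_rel !split_r. Qed.
Lemma join_lr i j : ej (lshift p i) (rshift m j) = true.
Proof. by rewrite /join_rel split_l split_r. Qed.
Lemma join_rl i j : ej (rshift m i) (lshift p j) = true.
Proof. by rewrite /join_rel split_l split_r. Qed.

Lemma join_sym : symmetric e1 -> symmetric e2 -> symmetric ej.
Proof.
move=> s1 s2 i j; case: (split_ordP i) => i' ->; case: (split_ordP j) => j' ->;
by rewrite ?join_ll ?join_rr ?join_lr ?join_rl.
Qed.

Lemma join_irr : irreflexive e1 -> irreflexive e2 -> irreflexive ej.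
Proof.
move=> s1 s2 i; case: (split_ordP i) => i' ->; by rewrite ?join_ll ?join_rr.
Qed.

Lemma card_sum (T : finType) (P : pred T) : #|[set y | P y]| = \sum_y (P y : nat).
Proof.
rewrite -sum1_card big_mkcond /=; apply: eq_bigr => y _; rewrite inE; by case: (P y).
Qed.

Lemma deg_l i : #|[set y | ej (lshift p i) y]| = (#|[set y | e1 i y]| + p)%N.
Proof.
rewrite !card_sum big_split_ord /=; congr (_ + _)%N.
  by apply: eq_bigr => y _; rewrite join_ll.
by rewrite (eq_bigr (fun _ => 1%N)) ?sum_nat_const ?card_ord ?muln1 // => y _; rewrite join_lr.
Qed.

Lemma deg_r i : #|[set y | ej (rshift m i) y]| = (#|[set y | e2 i y]| + m)%N.
Proof.
rewrite !card_sum big_split_ord /= addnC; congr (_ + _)%N.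
  by rewrite (eq_bigr (fun _ => 1%N)) ?sum_nat_const ?card_ord ?muln1 // => y _; rewrite join_rl.
by apply: eq_bigr => y _; rewrite join_rr.
Qed.

Variable R : fieldType.

Lemma lap_join :
  lap R ej + const_mx 1 =
  block_mx (lap R e1 + p%:R%:M + const_mx 1) 0 0 (lap R e2 + m%:R%:M + const_mx 1).
Proof.
apply/matrixP => i j; case: (split_ordP i) => i' ->; case: (split_ordP j) => j' ->;
rewrite ?block_mxEul ?block_mxEur ?block_mxEdl ?block_mxEdr !mxE.
- rewrite deg_l join_ll (inj_eq (@lshift_inj _ _)) natrD mulrnDl; congr (_ + _).
  by rewrite addrAC.
- by rewrite eq_lrshift join_lr mulr0n sub0r addNr.
- by rewrite eq_rlshift join_rl mulr0n sub0r addNr.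
- rewrite deg_r join_rr (inj_eq (@rshift_inj _ _)) natrD mulrnDl; congr (_ + _).
  by rewrite addrAC.
Qed.

Lemma det_join :
  \det (lap R ej + const_mx 1) =
  \det (lap R e1 + p%:R%:M + const_mx 1) * \det (lap R e2 + m%:R%:M + const_mx 1).
Proof. by rewrite lap_join det_ublock. Qed.
End Join.

End PartF.
Import PartF.

Module PartG.
Set Implicit Arguments. Unset Strict Implicit. Unset Printing Implicit Defensive.
Import Order.TTheory GRing.Theory Num.Theory.
Local Open Scope ring_scope.

Lemma graph_factor (R : rcfType) n (e : rel 'I_n) (V1 V2 : {set 'I_n}) q1 q2 (lam : seq R) (t : nat) :
  simple_graph e -> semi_regular_bip e V1 V2 q1 q2 -> (#|V1| <= #|V2|)%N ->
  char_poly (adjmx R e) =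
    \prod_(x <- lam ++ map -%R lam ++ nseq (n - 2 * size lam) 0) ('X - x%:P) ->
  all (fun x => 0 < x) lam -> head 0 lam = Num.sqrt (q1 * q2)%:R -> (0 < t)%N ->
  \det (lap R e + t%:R%:M + const_mx 1) =
   (n + t)%:R * (q1 + q2 + t)%:R * (q1 + t)%:R ^+ (#|V1| - size lam)
   * (q2 + t)%:R ^+ (#|V2| - size lam)
   * \prod_(l <- behead lam) ((q1 + t)%:R * (q2 + t)%:R - l ^+ 2).
Proof.
move=> [esy eirr] [[Hdisj Hcov Hbip Hd1 Hd2] [q1p q2p]] H12 Hch Hpos Hhead t0.
have Hrow i : \sum_k (lap R e + t%:R%:M) i k = t%:R.
  under eq_bigr do rewrite !mxE.
  rewrite big_split sumrB /=.
  rewrite (bigD1 i) //= eqxx big1 ?addr0; last by move=> k /negbTE; rewrite eq_sym => ->.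
  rewrite mulr1n -natr_sum -card_sum subrr add0r.
  rewrite (bigD1 i) //= eqxx mulr1n big1 ?addr0 // => k Hk.
  by rewrite eq_sym (negbTE Hk) mulr0n.
have tn0 : t%:R != 0 :> R by rewrite pnatr_eq0 -lt0n.
have tnn0 : t%:R + n%:R != 0 :> R by rewrite -natrD pnatr_eq0 addn_eq0 negb_and -lt0n t0.
rewrite (det_addJ Hrow) //.
set a : R := (q1 + t)%:R; set b : R := (q2 + t)%:R.
have a0 : 0 < a by rewrite ltr0n addn_gt0 q1p.
have b0 : 0 < b by rewrite ltr0n addn_gt0 q2p.
have EM : lap R e + t%:R%:M = Mab e V1 a b.
  apply/matrixP => i j; rewrite !mxE.
  case: (boolP (i \in V1)) => Hi.
    by rewrite Hd1 // /a natrD addrAC -mulrnDl.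
  by rewrite Hd2 ?(inV2 Hdisj Hcov) // /b natrD addrAC -mulrnDl.
rewrite EM.
have Hk1 := size_lam_le Hdisj Hcov Hbip eirr Hch Hpos.
have Hk2 : (size lam <= #|V2|)%N by apply: leq_trans H12.
have HM := det_Mab Hdisj Hcov Hbip eirr Hch a0 b0.
have HD : \det (Mab e V1 a b) = a ^+ (#|V1| - size lam) * b ^+ (#|V2| - size lam) * \prod_(l <- lam) (a * b - l ^+ 2).
  apply: (@mulIf _ ((a * b) ^+ size lam)); first by rewrite expf_neq0 // mulf_neq0 // gt_eqF.
  rewrite HM exprMn -{1}(subnK Hk1) -{1}(subnK Hk2) !exprD.
  set x1 := a ^+ (#|V1| - size lam); set x2 := b ^+ (#|V2| - size lam).
  set x3 := a ^+ size lam; set x4 := b ^+ size lam; ring.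
rewrite HD.
case: lam Hch Hpos Hhead Hk1 Hk2 HM HD => [|l1 lam'] Hch Hpos /= Hhead Hk1 Hk2 HM HD.
  by move/eqP: Hhead; rewrite eq_sym sqrtr_eq0 lern0 muln_eq0 !eqn0Ngt q1p q2p.
rewrite big_cons.
have Hl1 : l1 ^+ 2 = (q1 * q2)%:R by rewrite Hhead sqr_sqrtr // ler0n.
rewrite Hl1.
have Hab : a * b - (q1 * q2)%:R = t%:R * (q1 + q2 + t)%:R.
  rewrite /a /b !natrD !natrM; ring.
rewrite Hab; field; by [].
Qed.

End PartG.
Import PartG.

Import Order.TTheory GRing.Theory Num.Theory.
Local Open Scope ring_scope.
Unset Implicit Arguments.
Set Strict Implicit.

Theorem theorem4p1 (R : rcfType) (nu1 nu2 : nat)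
  (e1 : rel 'I_nu1) (e2 : rel 'I_nu2)
  (V1 V2 : {set 'I_nu1}) (V3 V4 : {set 'I_nu2})
  (q1 q2 q3 q4 : nat) (lam mu : seq R) :
  simple_graph e1 -> simple_graph e2 ->
  semi_regular_bip e1 V1 V2 q1 q2 ->
  semi_regular_bip e2 V3 V4 q3 q4 ->
  (#|V1| <= #|V2|)%N -> (#|V3| <= #|V4|)%N ->
  (* spec(G1) = {± lam_1, ..., ± lam_k1, 0^(nu1 - 2 k1)}, k1 = size lam *)
  char_poly (adjmx R e1) =
    \prod_(x <- lam ++ map -%R lam ++ nseq (nu1 - 2 * size lam) 0) ('X - x%:P) ->
  char_poly (adjmx R e2) =
    \prod_(x <- mu ++ map -%R mu ++ nseq (nu2 - 2 * size mu) 0) ('X - x%:P) ->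
  all (fun x => 0 < x) lam -> all (fun x => 0 < x) mu ->
  sorted >=%R lam -> sorted >=%R mu ->
  head 0 lam = Num.sqrt (q1 * q2)%:R -> head 0 mu = Num.sqrt (q3 * q4)%:R ->
  (num_spanning_trees (join_rel e1 e2))%:R =
    (q1 + q2 + nu2)%:R * (q3 + q4 + nu1)%:R
    * (q1 + nu2)%:R ^+ (#|V1| - size lam) * (q2 + nu2)%:R ^+ (#|V2| - size lam)
    * (q3 + nu1)%:R ^+ (#|V3| - size mu) * (q4 + nu1)%:R ^+ (#|V4| - size mu)
    * \prod_(l <- behead lam) ((q1 + nu2)%:R * (q2 + nu2)%:R - l ^+ 2)
    * \prod_(l <- behead mu) ((q3 + nu1)%:R * (q4 + nu1)%:R - l ^+ 2) :> R.
Proof.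
move=> sg1 sg2 sr1 sr2 H12 H34 Hc1 Hc2 Hp1 Hp2 _ _ Hh1 Hh2.
have pos_nu (n : nat) (e : rel 'I_n) V W qa qb (ls : seq R) :
    semi_regular_bip e V W qa qb -> head 0 ls = Num.sqrt (qa * qb)%:R ->
    char_poly (adjmx R e) =
      \prod_(x <- ls ++ map -%R ls ++ nseq (n - 2 * size ls) 0) ('X - x%:P) ->
    (0 < n)%N.
  move=> [_ [qa0 qb0]] Hh Hc; have := size_lam2 Hc.
  case: ls Hh Hc => [|l ls] /= Hh Hc; last by lia.
  by move/eqP: Hh; rewrite eq_sym sqrtr_eq0 lern0 muln_eq0 !eqn0Ngt qa0 qb0.
have n10 := pos_nu _ _ _ _ _ _ _ sr1 Hh1 Hc1.
have n20 := pos_nu _ _ _ _ _ _ _ sr2 Hh2 Hc2.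
have N0 : (0 < nu1 + nu2)%N by rewrite addn_gt0 n10.
case: (sg1) => s1 i1; case: (sg2) => s2 i2.
have MT := matrix_tree R (join_sym s1 s2) (join_irr i1 i2) N0.
rewrite det_join (graph_factor sg1 sr1 H12 Hc1 Hp1 Hh1 n20)
  (graph_factor sg2 sr2 H34 Hc2 Hp2 Hh2 n10) in MT.
apply: (@mulfI _ ((nu1 + nu2)%:R * (nu1 + nu2)%:R)).
  by rewrite mulf_neq0 // pnatr_eq0 -lt0n.
rewrite !natrM in MT; rewrite -MT [(nu2 + nu1)%N]addnC.
set x1 := (q1 + nu2)%:R ^+ _. set x2 := (q2 + nu2)%:R ^+ _.
set x3 := (q3 + nu1)%:R ^+ _. set x4 := (q4 + nu1)%:R ^+ _.
set p1 := \prod_(l <- behead lam) _. set p2 := \prod_(l <- behead mu) _.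
ring.
Qed.
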